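(* Let $\mathcal M$ be a $\Sigma$-module over a field $\mathbb F$ such that each $\mathcal M(n)$ has a basis $\mathcal B(n)$ stable under the action of $\Sigma_n$. For an object $(A,\beta)$ of $\beta(\mathcal M)$ set, for all ${\underline r}\in\mathrm{Comp}_p(n)$ and $[x]_{\underline r}\in\Sigma_{\underline r}\backslash\mathcal B(n)$, $\gamma_{[x]_{\underline r},{\underline r}}=\beta_{\mathscr O_{\Sigma_{\underline r}}([x]_{\underline r}),{\underline r}}$. Then $(A,\beta)\mapsto(A,\gamma)$ (identity on morphisms) defines a functor $P_{\mathcal M}:\beta(\mathcal M)\to\gamma(\mathcal M)$, and $P_{\mathcal M}$ is an isomorphism of categories.
   Context: $[n]=\{1,\dots,n\}$. A $\Sigma$-module is a sequence of $\mathbb F$-linear $\Sigma_n$-representations $\mathcal M(n)$. Compositions ${\underline r}=(r_1,\dots,r_p)\in\mathrm{Comp}_p(n)$ are tuples of nonnegative integers with sum $n$, identified with the partition of $[n]$ into consecutive intervals ${\underline r}_i$ of lengths $r_i$; $\Sigma_{\underline r}\subseteq\Sigma_n$ preserves each ${\underline r}_i$. For a group $H$ acting on a set, $[x]_H$, $\Omega_H(x)$, $\mathrm{Stab}_H(x)$ denote class, orbit, stabiliser; write $[x]_{\underline r},\mathrm{Stab}_{\underline r}$ for $H=\Sigma_{\underline r}$. $\mathscr O_{\Sigma_{\underline r}}([x]_{\underline r})=\sum_{y\in\Omega_{\Sigma_{\underline r}}(x)}y\in\mathcal M(n)^{\Sigma_{\underline r}}$. For $\rho\in\Sigma_p$: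 ${\underline r}^\rho=(r_{\rho^{-1}(1)},\dots,r_{\rho^{-1}(p)})$, $\rho^*\in\Sigma_n$ the block permutation with blocks of sizes $r_i$ associated to $\rho$. For ${\underline q}\in\mathrm{Comp}_s(p)$: ${\underline q}\rhd{\underline r}=(\sum_{i\in{\underline q}_1}r_i,\dots,\sum_{i\in{\underline q}_s}r_i)$. ${\underline r}\circ_1(l,m)=(l,m,r_2,\dots,r_p)$. Sums over $G/H$ are over left coset representatives. $\beta(\mathcal M)$: objects $(A,\beta)$ with $\beta_{x,{\underline r}}:A^{\times p}\to A$ for ${\underline r}\in\mathrm{Comp}_p(n)$, $x\in\mathcal M(n)^{\Sigma_{\underline r}}$, satisfying ($\beta$1) $\beta_{x,{\underline r}}(a_1,\dots,a_p)=\beta_{\rho^*\cdot x,{\underline r}^\rho}(a_{\rho^{-1}(1)},\dots,a_{\rho^{-1}(p)})$; ($\beta$2) $\beta_{x,(0,r_1,\dots,r_p)}(a_0,\dots,a_p)=\beta_{x,(r_1,\dots,r_p)}(a_1,\dots,a_p)$; ($\beta$3) $\beta_{x,{\underline r}}(\lambda a_1,a_2,\dots)=\lambda^{r_1}\beta_{x,{\underline r}}(a_1,a_2,\dots)$; ($\beta$4) for ${\underline q}\in\mathrm{Comp}_s(p)$, $\beta_{x,{\underline r}}$ at ($a_1$ repeated $q_1$ times, …, $a_s$ repeated $q_s$ times) equals $\beta_{\sum_{\sigma\in\Sigma_{{\underline q}\rhd{\underline r}}/\Sigma_{\underline r}}\sigma\cdot x,{\underline q}\rhd{\underline r}}(a_1,\dots,a_s)$;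 ($\beta$5) $\beta_{x,{\underline r}}(a_0+a_1,a_2,\dots)=\sum_{l+m=r_1}\beta_{x,{\underline r}\circ_1(l,m)}(a_0,a_1,a_2,\dots)$; ($\beta$6) $\beta_{\lambda x+y,{\underline r}}=\lambda\beta_{x,{\underline r}}+\beta_{y,{\underline r}}$. Morphisms: linear maps commuting with all operations. $\gamma(\mathcal M)$: objects $(A,\gamma)$ with $\gamma_{[x]_{\underline r},{\underline r}}:A^{\times p}\to A$ for ${\underline r}\in\mathrm{Comp}_p(n)$, $[x]_{\underline r}\in\Sigma_{\underline r}\backslash\mathcal B(n)$, satisfying ($\gamma$1) $\gamma_{[x]_{\underline r},{\underline r}}(a_1,\dots,a_p)=\gamma_{[\rho^*\cdot x]_{{\underline r}^\rho},{\underline r}^\rho}(a_{\rho^{-1}(1)},\dots,a_{\rho^{-1}(p)})$; ($\gamma$2) $\gamma_{[x]_{(0,{\underline r})},(0,{\underline r})}(a_0,a_1,\dots,a_p)=\gamma_{[x]_{\underline r},{\underline r}}(a_1,\dots,a_p)$; ($\gamma$3) $\gamma_{[x]_{\underline r},{\underline r}}(\lambda a_1,\dots)=\lambda^{r_1}\gamma_{[x]_{\underline r},{\underline r}}(a_1,\dots)$; ($\gamma$4) for ${\underline q}\in\mathrm{Comp}_s(p)$ and $x\in\mathcal B(n)$, $\gamma_{[x]_{\underline r},{\underline r}}$ at ($a_1$ repeated $q_1$ times, …, $a_s$ repeated $q_s$ times) equals $\frac{|\mathrm{Stab}_{{\underline q}\rhd{\underline r}}(x)|}{|\mathrm{Stab}_{\underline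 r}(x)|}\gamma_{[x]_{{\underline q}\rhd{\underline r}},{\underline q}\rhd{\underline r}}(a_1,\dots,a_s)$; ($\gamma$5) $\gamma_{[x]_{\underline r},{\underline r}}(a_0+a_1,a_2,\dots,a_p)=\sum_{l+m=r_1}\sum_{[y]\in\Sigma_{{\underline r}\circ_1(l,m)}\backslash\Omega_{\Sigma_{\underline r}}(x)}\gamma_{[y]_{{\underline r}\circ_1(l,m)},{\underline r}\circ_1(l,m)}(a_0,a_1,\dots,a_p)$. Morphisms: linear maps commuting with the operations. Integer coefficients are mapped into $\mathbb F$. *)

(* Defs.v *)
From HB Require Import structures.
From mathcomp Require Import all_boot all_order all_algebra all_fingroup.
Set Implicit Arguments. Unset Strict Implicit. Unset Printing Implicit Defensive.
Import GRing.Theory.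
Local Open Scope ring_scope.

(* A Sigma-module over F whose components M(n) have a basis B(n) stable under
   Sigma_n.  [act] is a genuine left action: (s * t)%g is "s then t" in
   MathComp, i.e. the composite t o s, and act (t o s) = act t o act s. *)
Record sigmaModB (F : fieldType) := SigmaModB {
  Mc : nat -> lmodType F;
  act : forall n, 'S_n -> Mc n -> Mc n;
  act_lin : forall n (s : 'S_n) (c : F) (u v : Mc n),
      act s (c *: u + v) = c *: act s u + act s v;
  act1 : forall n (v : Mc n), act 1%g v = v;
  actM : forall n (s t : 'S_n) (v : Mc n), act (s * t)%g v = act t (act s v);
  Bas : forall n, Mc n -> Prop;
  Bas_act : forall n (s : 'S_n) (b : Mc n), Bas b -> Bas (act s b);
  Bas_free : forall n (s : seq (Mc n)) (c : Mc n -> F), uniq s ->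
      (forall b, b \in s -> Bas b) -> \sum_(b <- s) c b *: b = 0 ->
      forall b, b \in s -> c b = 0;
  Bas_span : forall n (v : Mc n), exists2 s : seq (Mc n),
      (forall b, b \in s -> Bas b) & exists c : Mc n -> F, v = \sum_(b <- s) c b *: b
}.
Arguments Mc {F} _ _.
Arguments act {F _ n}.
Arguments Bas {F _ n}.

(* Compositions r = (r_1,...,r_p) are seq nat; positions of [n] are 0-based. *)
Definition off (r : seq nat) (i : nat) : nat := sumn (take i r).
(* index (0-based) of the interval of r containing the position i *)
Definition blk (r : seq nat) (i : nat) : nat :=
  count (fun j => (off r j.+1 <= i)%N) (iota 0 (size r)).
Definition youngS (n : nat) (r : seq nat) : {set 'S_n} :=
  [set s : 'S_n | [forall i : 'I_n, blk r (s i) == blk r i]].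

Definition permseq (T : Type) (p : nat) (rho : 'S_p) (s : seq T) (d : T) : seq T :=
  [seq nth d s ((rho^-1)%g j) | j <- enum 'I_p].
(* tau is the block permutation rho^* : block i of r goes, in order, to block
   rho(i) of r^rho *)
Definition is_blockperm (n p : nat) (rho : 'S_p) (r : seq nat) (tau : 'S_n) : Prop :=
  forall (i : 'I_p) (j : 'I_n), (off r i <= j < off r i + nth 0%N r i)%N ->
    val (tau j) = (off (permseq rho r 0%N) (rho i) + (j - off r i))%N.

Definition qrhd (q r : seq nat) : seq nat := [seq sumn s | s <- reshape q r].

Section Ops.
Variables (F : fieldType) (M : sigmaModB F).

Definition youngInv n (r : seq nat) (x : Mc M n) : Prop :=
  forall s, s \in youngS n r -> act s x = x.
Definition orbsum n (r : seq nat) (x : Mc M n) : Mc M n :=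
  \sum_(y <- undup [seq act s x | s <- enum (youngS n r)]) y.
Definition stab n (r : seq nat) (x : Mc M n) : {set 'S_n} :=
  [set s in youngS n r | act s x == x].
(* sum_{sigma in Sigma_{r'} / Sigma_r} sigma . x  (left cosets sigma Sigma_r,
   which are MathComp right cosets Sigma_r :* sigma) *)
Definition cosetsum n (r r' : seq nat) (x : Mc M n) : Mc M n :=
  \sum_(C in rcosets (youngS n r) (youngS n r')) act (repr C) x.
(* Sigma_{r'}-orbits in Omega_{Sigma_r}(x), each represented by the set of
   t in Sigma_r with t.x in that orbit *)
Definition orbclasses n (r' r : seq nat) (x : Mc M n) : {set {set 'S_n}} :=
  [set [set t in youngS n r | [exists u in youngS n r', act t x == act u (act s x)]]
    | s in youngS n r].

Variable A : lmodType F.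
(* operations: ops n x [:: (r_1,a_1); ...; (r_p,a_p)] stands for
   beta_{x,r}(a_1,...,a_p) (resp. gamma_{[x]_r,r}(a_1,...,a_p));
   only inputs with sumn r = n and x invariant (resp. x in B(n)) matter. *)
Definition ops := forall n, Mc M n -> seq (nat * A) -> A.

Definition fargs (A' : lmodType F) (f : A -> A') (ra : seq (nat * A)) :=
  [seq (p.1, f p.2) | p <- ra].

Definition isBeta (b : ops) : Prop :=
      (forall n (x : Mc M n) (ra : seq (nat * A)) (rho : 'S_(size ra)) (tau : 'S_n),
        sumn (unzip1 ra) = n -> youngInv (unzip1 ra) x ->
        is_blockperm rho (unzip1 ra) tau ->
        b n x ra = b n (act tau x) (permseq rho ra (0%N, 0))) /\
      (forall n (x : Mc M n) (a0 : A) ra, sumn (unzip1 ra) = n -> youngInv (unzip1 ra) x ->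
        b n x ((0%N, a0) :: ra) = b n x ra) /\
      (forall n (x : Mc M n) r1 (c : F) (a1 : A) ra, sumn (r1 :: unzip1 ra) = n ->
        youngInv (r1 :: unzip1 ra) x ->
        b n x ((r1, c *: a1) :: ra) = c ^+ r1 *: b n x ((r1, a1) :: ra)) /\
      (forall n (x : Mc M n) (r : seq nat) (qa : seq (nat * A)), sumn r = n ->
        sumn (unzip1 qa) = size r -> youngInv r x ->
        b n x (zip r (flatten [seq nseq p.1 p.2 | p <- qa])) =
        b n (cosetsum r (qrhd (unzip1 qa) r) x) (zip (qrhd (unzip1 qa) r) (unzip2 qa))) /\
      (forall n (x : Mc M n) r1 (a0 a1 : A) ra, sumn (r1 :: unzip1 ra) = n ->
        youngInv (r1 :: unzip1 ra) x ->
        b n x ((r1, a0 + a1) :: ra) =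
        \sum_(l < r1.+1) b n x ((val l, a0) :: (r1 - l, a1)%N :: ra)) /\
      (forall n (x y : Mc M n) (c : F) ra, sumn (unzip1 ra) = n ->
        youngInv (unzip1 ra) x -> youngInv (unzip1 ra) y ->
        b n (c *: x + y) ra = c *: b n x ra + b n y ra).

Definition isGamma (g : ops) : Prop :=
  (* well-definedness: gamma depends only on the class [x]_r *)
      (forall n (x : Mc M n) ra (s : 'S_n), sumn (unzip1 ra) = n -> Bas x ->
        s \in youngS n (unzip1 ra) -> g n (act s x) ra = g n x ra) /\
      (forall n (x : Mc M n) (ra : seq (nat * A)) (rho : 'S_(size ra)) (tau : 'S_n),
        sumn (unzip1 ra) = n -> Bas x ->
        is_blockperm rho (unzip1 ra) tau ->
        g n x ra = g n (act tau x) (permseq rho ra (0%N, 0))) /\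
      (forall n (x : Mc M n) (a0 : A) ra, sumn (unzip1 ra) = n -> Bas x ->
        g n x ((0%N, a0) :: ra) = g n x ra) /\
      (forall n (x : Mc M n) r1 (c : F) (a1 : A) ra, sumn (r1 :: unzip1 ra) = n ->
        Bas x ->
        g n x ((r1, c *: a1) :: ra) = c ^+ r1 *: g n x ((r1, a1) :: ra)) /\
      (forall n (x : Mc M n) (r : seq nat) (qa : seq (nat * A)), sumn r = n ->
        sumn (unzip1 qa) = size r -> Bas x ->
        g n x (zip r (flatten [seq nseq p.1 p.2 | p <- qa])) =
        ((#|stab (qrhd (unzip1 qa) r) x| %/ #|stab r x|)%N%:R : F) *:
          g n x (zip (qrhd (unzip1 qa) r) (unzip2 qa))) /\
      (forall n (x : Mc M n) r1 (a0 a1 : A) ra, sumn (r1 :: unzip1 ra) = n ->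
        Bas x ->
        g n x ((r1, a0 + a1) :: ra) =
        \sum_(l < r1.+1)
          \sum_(C in orbclasses (val l :: (r1 - l)%N :: unzip1 ra) (r1 :: unzip1 ra) x)
            g n (act (repr C) x) ((val l, a0) :: (r1 - l, a1)%N :: ra)).

Definition gammaOf (b : ops) : ops :=
  fun n x ra => b n (orbsum (unzip1 ra) x) ra.

End Ops.
Arguments gammaOf {F M A} b n x ra.

Definition isBetaMor (F : fieldType) (M : sigmaModB F) (A A' : lmodType F)
    (b : ops M A) (b' : ops M A') (f : A -> A') : Prop :=
  forall n (x : Mc M n) ra, sumn (unzip1 ra) = n -> youngInv (unzip1 ra) x ->
    f (b n x ra) = b' n x (fargs f ra).

Definition isGammaMor (F : fieldType) (M : sigmaModB F) (A A' : lmodType F)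
    (g : ops M A) (g' : ops M A') (f : A -> A') : Prop :=
  forall n (x : Mc M n) ra, sumn (unzip1 ra) = n -> Bas x ->
    f (g n x ra) = g' n x (fargs f ra).

(* Main.v *)
From Pilot Require Import Defs.
From Stdlib Require Import ClassicalEpsilon.
From HB Require Import structures.
From mathcomp Require Import all_boot all_order all_algebra all_fingroup.
Import GRing.Theory.
Local Open Scope ring_scope.
Import Pilot.Defs.
Set Implicit Arguments. Unset Strict Implicit. Unset Printing Implicit Defensive.

Section Gen.
Variable V : nmodType.

Lemma sum_undup_eq (T : eqType) (L1 L2 : seq T) (f : T -> V) :
  L1 =i L2 -> \sum_(y <- undup L1) f y = \sum_(y <- undup L2) f y.
Proof.
move=> e; apply/perm_big/uniq_perm; rewrite ?undup_uniq // => y.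
by rewrite !mem_undup e.
Qed.

Lemma sum_sub (T : eqType) (L L' : seq T) (f : T -> V) :
  uniq L -> uniq L' -> {subset L <= L'} ->
  \sum_(y <- L') (if y \in L then f y else 0) = \sum_(y <- L) f y.
Proof.
move=> uL uL' sub; rewrite -big_mkcond -big_filter; apply/perm_big/uniq_perm.
- exact: filter_uniq.
- done.
by move=> y; rewrite mem_filter; case yL: (y \in L) => //=; rewrite (sub _ yL).
Qed.

Lemma sum_sub0 (T : eqType) (L L' : seq T) (f : T -> V) :
  uniq L -> uniq L' -> {subset L <= L'} -> (forall y, y \in L' -> y \notin L -> f y = 0) ->
  \sum_(y <- L') f y = \sum_(y <- L) f y.
Proof.
move=> uL uL' sub f0; rewrite -(sum_sub f uL uL' sub); apply: eq_big_seq => y yL'.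
by case: ifP => // /negbT; apply: f0.
Qed.

Lemma sum_pred1 (T : eqType) (L : seq T) (i : T) (f : T -> V) :
  uniq L -> i \in L -> \sum_(y <- L | y == i) f y = f i.
Proof. by move=> u iL; rewrite -big_filter (filter_pred1_uniq u iL) big_seq1. Qed.

Lemma sum_part (T T' : eqType) (L : seq T) (k : T -> T') (f : T -> V) :
  \sum_(y <- L) f y = \sum_(z <- undup (map k L)) \sum_(y <- L | k y == z) f y.
Proof.
under [RHS]eq_bigr do rewrite big_mkcond.
rewrite exchange_big /=; apply: eq_big_seq => y yL.
rewrite -big_mkcond /=.
under eq_bigl do rewrite eq_sym.
rewrite (sum_pred1 (i:=k y)) //.
- exact: undup_uniq.
- by rewrite mem_undup map_f.
Qed.
End Gen.
Section Orb.
Variables (F : fieldType) (M : sigmaModB F).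
Local Notation V n := (Mc M n).

Lemma act0 n (s : 'S_n) : act s (0 : V n) = 0.
Proof.
have h := act_lin s 1 (0 : V n) 0; rewrite !scale1r addr0 in h.
by apply: (addrI (act s (0 : V n))); rewrite addr0 -h.
Qed.

Lemma actD n (s : 'S_n) (u v : V n) : act s (u + v) = act s u + act s v.
Proof. by have := act_lin s 1 u v; rewrite !scale1r. Qed.

Lemma actZ n (s : 'S_n) c (u : V n) : act s (c *: u) = c *: act s u.
Proof. by have := act_lin s c u 0; rewrite !addr0 act0 addr0. Qed.

Lemma act_sum n (s : 'S_n) (T : Type) (L : seq T) (P : pred T) (f : T -> V n) :
  act s (\sum_(i <- L | P i) f i) = \sum_(i <- L | P i) act s (f i).
Proof.
elim: L => [|a L IH]; first by rewrite !big_nil act0.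
by rewrite !big_cons; case: (P a); rewrite ?actD IH.
Qed.

Lemma actK n (s : 'S_n) : cancel (@act F M n s) (@act F M n s^-1).
Proof. by move=> v; rewrite -actM mulgV act1. Qed.

Lemma actKV n (s : 'S_n) : cancel (@act F M n s^-1) (@act F M n s).
Proof. by move=> v; rewrite -actM mulVg act1. Qed.

Lemma act_inj n (s : 'S_n) : injective (@act F M n s).
Proof. exact: can_inj (@actK n s). Qed.

Lemma Bas_neq0 n (b : V n) : Bas b -> b != 0.
Proof.
move=> Bb; apply/eqP => b0.
have h : (fun _ : V n => 1 : F) b = 0.
  apply: (@Bas_free F M n [:: b] (fun _ => 1)) => //.
  - by move=> z; rewrite mem_seq1 => /eqP ->.
  - by rewrite big_seq1 scale1r b0.
  - by rewrite mem_seq1.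
by move: h => /= /eqP; rewrite oner_eq0.
Qed.

Definition orbl n (H : {set 'S_n}) (y : V n) := undup [seq act s y | s <- enum H].

Lemma orblP n (H : {set 'S_n}) (y z : V n) :
  reflect (exists2 s, s \in H & z = act s y) (z \in orbl H y).
Proof.
rewrite mem_undup; apply: (iffP mapP) => [[s]|[s]]; rewrite ?mem_enum => sH ->;
  by exists s; rewrite ?mem_enum.
Qed.

Lemma orbl_uniq n (H : {set 'S_n}) (y : V n) : uniq (orbl H y).
Proof. exact: undup_uniq. Qed.

Variables (n : nat) (H : {group 'S_n}).

Lemma orbl_refl (y : V n) : y \in orbl H y.
Proof. by apply/orblP; exists 1%g; rewrite ?group1 ?act1. Qed.

Lemma orbl_act (y : V n) s : s \in H -> act s y \in orbl H y.
Proof. by move=> sH; apply/orblP; exists s. Qed.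

Lemma orbl_sym (y z : V n) : z \in orbl H y -> y \in orbl H z.
Proof.
by case/orblP => s sH ->; apply/orblP; exists s^-1%g; rewrite ?groupV ?actK.
Qed.

Lemma orbl_trans (y z w : V n) : z \in orbl H y -> w \in orbl H z -> w \in orbl H y.
Proof.
case/orblP => s sH -> /orblP [t tH ->]; apply/orblP; exists (s * t)%g;
  by rewrite ?groupM ?actM.
Qed.

Lemma orbl_eq (y z : V n) : z \in orbl H y -> orbl H z =i orbl H y.
Proof.
move=> zy w; apply/idP/idP => [wz|wy]; first exact: orbl_trans wz.
exact: orbl_trans (orbl_sym zy) wy.
Qed.

Lemma orbl_Bas (y z : V n) : Bas y -> z \in orbl H y -> Bas z.
Proof. by move=> By /orblP [s _ ->]; apply: Bas_act. Qed.

Lemma sum_orbl_eq (y z : V n) : z \in orbl H y ->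
  \sum_(w <- orbl H z) w = \sum_(w <- orbl H y) w.
Proof.
move=> zy; apply/perm_big/uniq_perm; rewrite ?orbl_uniq //; exact: orbl_eq.
Qed.

Lemma act_sum_orbl (y : V n) s : s \in H ->
  act s (\sum_(w <- orbl H y) w) = \sum_(w <- orbl H y) w.
Proof.
move=> sH; rewrite act_sum -(big_map (act s) xpredT id); apply/perm_big/uniq_perm.
- by rewrite map_inj_uniq ?orbl_uniq //; apply: act_inj.
- exact: orbl_uniq.
move=> w; apply/mapP/idP => [[z zy ->]|wy].
  by apply: orbl_trans zy _; apply: orbl_act.
exists (act s^-1 w); last by rewrite actKV.
by apply: orbl_trans wy _; apply: orbl_act; rewrite groupV.
Qed.

Definition rep (y : V n) : V n := choose (fun z => z \in orbl H y) y.

Lemma rep_in (y : V n) : rep y \in orbl H y.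
Proof. by apply: chooseP; apply: orbl_refl. Qed.

Lemma rep_eq (y z : V n) : z \in orbl H y -> rep z = rep y.
Proof.
move=> zy; rewrite /rep (eq_choose (orbl_eq zy)); apply: choose_id => //.
exact: orbl_refl.
Qed.

End Orb.
From mathcomp Require Import zify.
Section Young.

Lemma young_group_set n r : group_set (youngS n r).
Proof.
apply/group_setP; split; first by rewrite inE; apply/forallP => i; rewrite perm1.
move=> s t; rewrite !inE => /forallP sP /forallP tP; apply/forallP => i.
by rewrite permM (eqP (tP _)) (eqP (sP _)).
Qed.
Canonical young_group n r := Group (young_group_set n r).

Lemma off0 r : off r 0 = 0%N.
Proof. by rewrite /off take0. Qed.

Lemma off_cons a r i : off (a :: r) i.+1 = (a + off r i)%N.
Proof. by []. Qed.

Lemma blk_nil i : blk [::] i = 0%N.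
Proof. by []. Qed.

Lemma blk_cons a r i :
  blk (a :: r) i = if (a <= i)%N then (blk r (i - a)).+1 else 0%N.
Proof.
rewrite /blk /= -[1%N]addn0 iotaDl count_map addn0 off_cons off0 addn0.
case: (leqP a i) => ai.
  rewrite add1n; congr S; apply: eq_count => j /=; rewrite add1n off_cons; lia.
rewrite add0n; apply/eqP; rewrite eqn0Ngt -has_count; apply/hasPn => j _ /=.
rewrite add1n off_cons; lia.
Qed.

Lemma blk_le r m i : (m <= size r)%N -> (m <= blk r i)%N = (off r m <= i)%N.
Proof.
elim: r m i => [|a r IH] [|m] i //=.
move=> msz; rewrite ltnS in msz; rewrite blk_cons off_cons.
case: (leqP a i) => ai; first by rewrite ltnS IH //; apply/idP/idP; lia.
by rewrite ltn0; apply/esym/negbTE; lia.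
Qed.

Lemma off_size r : off r (size r) = sumn r.
Proof. by rewrite /off take_size. Qed.

Lemma blk_lt r i : (i < sumn r)%N -> (blk r i < size r)%N.
Proof. by move=> ir; rewrite ltnNge blk_le // off_size -ltnNge. Qed.

Lemma blk_cat r1 r2 i : blk (r1 ++ r2) i =
  if (sumn r1 <= i)%N then (size r1 + blk r2 (i - sumn r1))%N else blk r1 i.
Proof.
elim: r1 i => [|a r1 IH] i /=; first by rewrite subn0.
rewrite !blk_cons IH; case: (leqP a i) => ai.
  case: (leqP (sumn r1) (i - a)) => h.
    have -> : (a + sumn r1 <= i)%N by lia.
    by rewrite subnDA.
  by have -> : (a + sumn r1 <= i)%N = false by lia.
by have -> : (a + sumn r1 <= i)%N = false by lia.
Qed.

Lemma blk_qrhd q r i j : blk r i = blk r j -> blk (qrhd q r) i = blk (qrhd q r) j.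
Proof.
elim: q r i j => [|k q IH] r i j //.
move=> e0; have : blk (take k r ++ drop k r) i = blk (take k r ++ drop k r) j.
  by rewrite cat_take_drop.
rewrite !blk_cat /qrhd /= !blk_cons -/(qrhd q (drop k r)); clear e0.
set S := sumn (take k r).
case: (leqP S i) => hi; case: (leqP S j) => hj.
- by move/eqP; rewrite eqn_add2l => /eqP e; rewrite (IH _ _ _ e).
- move=> e; have := blk_lt hj; rewrite -e; lia.
- move=> e; have := blk_lt hi; rewrite e; lia.
- by [].
Qed.

Lemma youngS_qrhd n q r : youngS n r \subset youngS n (qrhd q r).
Proof.
apply/subsetP => s; rewrite !inE => /forallP sP; apply/forallP => i.
by rewrite (blk_qrhd q (eqP (sP i))).
Qed.

Lemma blk_refine l r1 r i : (l <= r1)%N ->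
  blk (r1 :: r) i = (blk (l :: (r1 - l)%N :: r) i).-1.
Proof.
move=> lr; rewrite !blk_cons.
case: (leqP l i) => li; case: (leqP r1 i) => ri /=.
- have -> : (r1 - l <= i - l)%N by lia.
  by have -> : (i - l - (r1 - l) = i - r1)%N by lia.
- by have -> : (r1 - l <= i - l)%N = false by lia.
- lia.
- by [].
Qed.

Lemma youngS_refine n l r1 r : (l <= r1)%N ->
  youngS n (l :: (r1 - l)%N :: r) \subset youngS n (r1 :: r).
Proof.
move=> lr; apply/subsetP => s; rewrite !inE => /forallP sP; apply/forallP => i.
by rewrite (blk_refine r (s i) lr) (blk_refine r i lr) (eqP (sP i)).
Qed.

Lemma youngS0 n r : youngS n (0%N :: r) = youngS n r.
Proof.
apply/setP => s; rewrite !inE.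
by apply/forallP/forallP => h i; move: (h i); rewrite !blk_cons !leq0n !subn0.
Qed.

End Young.
Section Conj.

Lemma off_S r i : (i < size r)%N -> off r i.+1 = (off r i + nth 0%N r i)%N.
Proof. by move=> ir; rewrite /off (take_nth 0%N ir) sumn_rcons. Qed.

Lemma blk_eq r k x : (k < size r)%N -> (off r k <= x < off r k + nth 0%N r k)%N ->
  blk r x = k.
Proof.
move=> kr /andP [h1 h2]; apply/eqP; rewrite eqn_leq blk_le ?h1 ?(ltnW kr) // andbT.
by rewrite leqNgt blk_le // off_S // -ltnNge.
Qed.

Lemma nth_permseq (T : Type) p (rho : 'S_p) (s : seq T) d (j : 'I_p) :
  nth d (permseq rho s d) j = nth d s (rho^-1 j)%g.
Proof. by rewrite /permseq (nth_map j) ?size_enum_ord // nth_ord_enum. Qed.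

Lemma size_permseq (T : Type) p (rho : 'S_p) (s : seq T) d : size (permseq rho s d) = p.
Proof. by rewrite size_map size_enum_ord. Qed.

Lemma blockperm_blk n p (rho : 'S_p) r tau : size r = p -> sumn r = n ->
  is_blockperm rho r tau ->
  forall j : 'I_n, exists i : 'I_p, blk r j = i /\ blk (permseq rho r 0%N) (tau j) = rho i.
Proof.
move=> sr sn bp j.
have jn : (j < sumn r)%N by rewrite sn.
have ip : (blk r j < p)%N by rewrite -sr blk_lt.
exists (Ordinal ip); split => //.
have hi : (off r (blk r j) <= j < off r (blk r j) + nth 0%N r (blk r j))%N.
  rewrite -blk_le ?leqnn ?sr ?(ltnW ip) //=.
  by rewrite -off_S ?sr // ltnNge -blk_le ?sr // ltnn.
rewrite (bp (Ordinal ip) j hi); apply: blk_eq; first by rewrite size_permseq.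
rewrite nth_permseq permK /=; move: hi => /andP [h1 h2].
apply/andP; split; first by rewrite leq_addr.
by rewrite ltn_add2l ltn_subLR.
Qed.

Variables (n p : nat) (rho : 'S_p) (r : seq nat) (tau : 'S_n).
Hypotheses (sr : size r = p) (sn : sumn r = n) (bp : is_blockperm rho r tau).
Local Notation r' := (permseq rho r 0%N).

Lemma young_conj (s : 'S_n) : s \in youngS n r -> (tau^-1 * s * tau)%g \in youngS n r'.
Proof.
rewrite !inE => /forallP sP; apply/forallP => j.
rewrite !permM.
have [i0 [e0 f0]] := blockperm_blk sr sn bp (tau^-1 j)%g.
have [i1 [e1 f1]] := blockperm_blk sr sn bp (s (tau^-1 j))%g.
rewrite f1; rewrite permKV in f0; rewrite f0; apply/eqP; congr (nat_of_ord (rho _)).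
by apply: val_inj; rewrite /= -e0 -e1 (eqP (sP _)).
Qed.

Lemma young_conjV (s : 'S_n) : (tau^-1 * s * tau)%g \in youngS n r' -> s \in youngS n r.
Proof.
rewrite !inE => /forallP sP; apply/forallP => j.
have := eqP (sP (tau j)); rewrite !permM permK.
have [i0 [e0 f0]] := blockperm_blk sr sn bp j.
have [i1 [e1 f1]] := blockperm_blk sr sn bp (s j).
by rewrite f0 f1 e0 e1 => /val_inj /perm_inj ->.
Qed.

End Conj.

Section Conj2.
Variables (F : fieldType) (M : sigmaModB F).

Lemma orbsum_conj n p (rho : 'S_p) r (tau : 'S_n) (x : Mc M n) :
  size r = p -> sumn r = n -> is_blockperm rho r tau ->
  orbsum (permseq rho r 0%N) (act tau x) = act tau (orbsum r x).
Proof.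
move=> sr sn bp; rewrite /orbsum act_sum -(big_map (act tau) xpredT id).
apply/perm_big/uniq_perm; rewrite ?undup_uniq //.
  by rewrite map_inj_uniq ?undup_uniq //; apply: act_inj.
move=> z; rewrite mem_undup; apply/mapP/mapP.
  case=> s; rewrite mem_enum => sH ->.
  exists (act ((tau * s * tau^-1)%g) x); last by rewrite -!actM mulgKV.
  rewrite mem_undup; apply/mapP; exists (tau * s * tau^-1)%g => //.
  by rewrite mem_enum; apply: (young_conjV sr sn bp); rewrite !mulgA mulVg mul1g mulgKV.
case=> y; rewrite mem_undup => /mapP [s]; rewrite mem_enum => sH -> ->.
exists (tau^-1 * s * tau)%g; first by rewrite mem_enum; apply: young_conj.
by rewrite -!actM !mulgA mulgV mul1g.
Qed.

End Conj2.
Section Decomp.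
Variables (F : fieldType) (M : sigmaModB F).
Variables (n : nat) (H K : {group 'S_n}).
Hypothesis KH : K \subset H.
Variable x : Mc M n.

Lemma exists_orbl (a b : Mc M n) :
  [exists u in K, a == act u b] = (a \in orbl K b).
Proof.
apply/existsP/orblP => [[u /andP [uK /eqP ->]]|[u uK ->]]; first by exists u.
by exists u; rewrite uK eqxx.
Qed.

Definition kap (w : Mc M n) : {set 'S_n} :=
  [set t in H | [exists u in K, act t x == act u w]].

Lemma kapE w t : (t \in kap w) = (t \in H) && (act t x \in orbl K w).
Proof. by rewrite inE exists_orbl. Qed.

Lemma kap_eq (w1 w2 : Mc M n) : w1 \in orbl H x -> w2 \in orbl H x ->
  (kap w1 == kap w2) = (w1 \in orbl K w2).
Proof.
move=> /orblP [s1 s1H ->] _; apply/eqP/idP => [e|h].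
  have : s1 \in kap (act s1 x) by rewrite kapE s1H orbl_refl.
  by rewrite e kapE => /andP [].
apply/setP => t; rewrite !kapE; case: (t \in H) => //=.
apply/idP/idP => h2; first exact: orbl_trans h h2.
exact: orbl_trans (orbl_sym h) h2.
Qed.

Lemma orbl_sub (y : Mc M n) : {subset orbl K y <= orbl H y}.
Proof. by move=> z /orblP [u uK ->]; apply/orblP; exists u => //; apply: (subsetP KH). Qed.

Lemma orbit_decomp :
  \sum_(w <- orbl H x) w =
  \sum_(C in [set [set t in H | [exists u in K, act t x == act u (act s x)]] | s in H])
     \sum_(w <- orbl K (act (repr C) x)) w.
Proof.
rewrite (sum_part _ kap) -big_enum /=.
set S := [set _ | s in H].
have -> : \sum_(C <- enum S) \sum_(w <- orbl K (act (repr C) x)) w =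
          \sum_(C <- undup (map kap (orbl H x))) \sum_(w <- orbl K (act (repr C) x)) w.
  apply/perm_big/uniq_perm; rewrite ?enum_uniq ?undup_uniq // => C.
  rewrite mem_enum mem_undup; apply/imsetP/mapP => [[s sH ->]|[w /orblP [s sH ->] ->]].
    by exists (act s x); rewrite ?orbl_act.
  by exists s.
apply: eq_big_seq => C; rewrite mem_undup => /mapP [w0 w0H ->].
rewrite -big_filter; apply/perm_big/uniq_perm; rewrite ?filter_uniq ?orbl_uniq //.
have t0 : repr (kap w0) \in kap w0.
  move/orblP: (w0H) => [s sH ->]; apply: (@mem_repr _ _ s).
  by rewrite kapE sH orbl_refl.
set t := repr (kap w0) in t0 *.
move: (t0); rewrite kapE => /andP [tH tw0].
have tx : act t x \in orbl H x by apply: orbl_act.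
have ek : kap (act t x) = kap w0 by apply/eqP; rewrite kap_eq.
move=> w; rewrite mem_filter; apply/andP/idP => [[/eqP e wH]|wt].
  by rewrite -(kap_eq wH tx) ek e.
have wH : w \in orbl H x.
  by apply: orbl_trans tx _; apply: orbl_sub.
by rewrite wH -ek kap_eq.
Qed.

End Decomp.
Section CosetSum.
Variables (F : fieldType) (M : sigmaModB F).
Variable n : nat.

Definition stabS (G : {set 'S_n}) (x : Mc M n) := [set s in G | act s x == x].

Lemma stab_group_set (G : {group 'S_n}) x : group_set (stabS G x).
Proof.
apply/group_setP; split; first by rewrite inE group1 act1 eqxx.
move=> s t; rewrite !inE => /andP [sG /eqP sx] /andP [tG /eqP tx].
by rewrite groupM // actM sx tx eqxx.
Qed.
Canonical stab_group (G : {group 'S_n}) x := Group (stab_group_set G x).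

Lemma orbl_actin (H : {group 'S_n}) (y z : Mc M n) h : h \in H ->
  (act h z \in orbl H y) = (z \in orbl H y).
Proof.
move=> hH; apply/idP/idP => h1.
  by rewrite -(actK h z); apply: orbl_trans h1 _; apply: orbl_act; rewrite groupV.
by apply: orbl_trans h1 _; apply: orbl_act.
Qed.

Lemma sum_count (V : nmodType) (T : eqType) (L : seq T) (f : T -> V) :
  \sum_(v <- L) f v = \sum_(v <- undup L) f v *+ count_mem v L.
Proof.
rewrite (sum_part _ id) map_id; apply: eq_bigr => z _.
rewrite (eq_bigr (fun _ => f z)); last by move=> y /eqP ->.
by rewrite big_const_seq iter_addr_0.
Qed.

Variables (H K : {group 'S_n}).
Hypothesis HK : H \subset K.
Variable x : Mc M n.

Section Cond.
Variable g : 'S_n.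
Hypothesis gK : g \in K.
Definition cond (d : 'S_n) := act g x \in map (act d) (orbl H x).

Lemma condE d : cond d = (act d^-1 (act g x) \in orbl H x).
Proof.
apply/mapP/idP => [[w wO ->]|h]; first by rewrite actK.
by exists (act d^-1 (act g x)); rewrite ?actKV.
Qed.

Lemma condM h d : h \in H -> cond (h * d)%g = cond d.
Proof. by move=> hH; rewrite !condE invMg actM orbl_actin // groupV. Qed.

Lemma stabSK : stabS K x \subset K.
Proof. by apply/subsetP => s; rewrite inE => /andP []. Qed.

Lemma cond_mul d : (d \in K) && cond d = ((g * d^-1)%g \in (stabS K x * H)%g).
Proof.
have sub : (stabS K x * H)%g \subset K by apply: mul_subG => //; apply: stabSK.
rewrite condE -actM; apply/andP/idP => [[dK /orblP [h hH e]]|m].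
  have hK : h \in K by apply: (subsetP HK).
  rewrite -(mulgKV h (g * d^-1)%g); apply: mem_mulg => //.
  by rewrite inE !groupM ?groupV //= actM e -actM mulgV act1.
have := subsetP sub _ m; rewrite groupMl // groupV => dK; split => //.
case/mulsgP: m => s h; rewrite inE => /andP [sK /eqP sx] hH ->.
by rewrite actM sx; apply: orbl_act.
Qed.

Lemma count_cond :
  ((\sum_(D in rcosets H K) (cond (repr D) : nat)) * #|stabS H x|)%N = #|stabS K x|.
Proof.
set cnt := \sum_(D in _) _.
have part := rcosets_partition HK.
have e1 : (\sum_(d in K) (cond d : nat))%N = (#|H| * cnt)%N.
  move/andP: part => [/eqP cov /andP [triv _]].
  rewrite -{1}cov big_trivIset // /cnt big_distrr /=.
  apply: eq_bigr => D /rcosetsP [k kK ->].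
  have rk : repr ((H :* k)%g) \in (H :* k)%g by apply: mem_repr_rcoset.
  rewrite (eq_bigr (fun _ => (cond (repr ((H :* k)%g)) : nat))).
    by rewrite sum_nat_const card_rcoset.
  move=> d dD; rewrite -(mulgKV (repr ((H :* k)%g)) d) condM //.
  move: dD rk; rewrite !mem_rcoset => h1 h2.
  set r := repr _ in h2 *.
  have -> : (d * r^-1 = (d * k^-1) * (r * k^-1)^-1)%g.
    by rewrite invMg invgK mulgA mulgKV.
  by rewrite groupM ?groupV.
have e2 : (\sum_(d in K) (cond d : nat))%N = #|(stabS K x * H)%g|.
  rewrite -(card_preimset _ (f := fun d => (g * d^-1)%g)); last first.
    by move=> d1 d2 /mulgI /invg_inj.
  rewrite -sum1_card big_mkcond [RHS]big_mkcond /=; apply: eq_bigr => d _.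
  rewrite inE -cond_mul; by case: (d \in K); case: (cond d).
have e3 : stabS K x :&: H = stabS H x.
  apply/setP => s; rewrite !inE; case sH: (s \in H); rewrite ?andbF ?andbT //=.
  by rewrite (subsetP HK _ sH).
have := mul_cardG (stab_group K x) H; rewrite /= e3 -e2 e1 => e.
by apply/eqP; rewrite -(eqn_pmul2l (cardG_gt0 H)) mulnA -e mulnC eqxx.
Qed.
End Cond.

Lemma repr_rcoset_in k : k \in K -> repr (H :* k)%g \in K.
Proof.
move=> kK; have := mem_repr_rcoset H k; rewrite mem_rcoset => h.
by rewrite -(mulgKV k (repr _)) groupM // (subsetP HK).
Qed.

Lemma coset_sum :
  \sum_(D in rcosets H K) act (repr D) (\sum_(w <- orbl H x) w) =
  (#|stabS K x| %/ #|stabS H x|)%:R *: \sum_(w <- orbl K x) w.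
Proof.
set Ml := flatten [seq map (act (repr D)) (orbl H x) | D <- enum (rcosets H K)].
have e1 : \sum_(D in rcosets H K) act (repr D) (\sum_(w <- orbl H x) w) =
          \sum_(v <- Ml) v.
  rewrite big_flatten big_map big_enum /=; apply: eq_bigr => D _.
  by rewrite act_sum big_map.
have mem : undup Ml =i orbl K x.
  move=> v; rewrite mem_undup; apply/flattenP/orblP.
    case=> s /mapP [D]; rewrite mem_enum => /rcosetsP [k kK ->] -> /mapP [w].
    move=> /orblP [h hH ->] ->; exists (h * repr (H :* k))%g; last by rewrite actM.
    by rewrite groupM ?repr_rcoset_in // (subsetP HK).
  case=> g gK ->; exists (map (act (repr (H :* g)%g)) (orbl H x)).
    by apply/mapP; exists (H :* g)%g; rewrite // mem_enum; apply/rcosetsP; exists g.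
  have := mem_repr_rcoset H g; rewrite mem_rcoset => h.
  apply/mapP; exists (act (g * (repr (H :* g)%g)^-1)%g x); last by rewrite -actM mulgKV.
  by apply: orbl_act; rewrite -[X in X \in H]invgK invMg invgK groupV.
have cnt : forall v, v \in orbl K x ->
    count_mem v Ml = (#|stabS K x| %/ #|stabS H x|)%N.
  move=> v /orblP [g gK ->].
  rewrite -(count_cond gK) mulnK ?(cardG_gt0 (stab_group H x)) //.
  rewrite count_flatten -map_comp sumnE big_map big_enum /=.
  apply: eq_bigr => D _; rewrite /= count_uniq_mem //.
  by rewrite map_inj_uniq ?orbl_uniq //; apply: act_inj.
rewrite e1 sum_count (eq_big_seq (fun v => v *+ (#|stabS K x| %/ #|stabS H x|)%N)).
  rewrite sumrMnl scaler_nat; congr (_ *+ _); apply/perm_big/uniq_perm => //.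
  - exact: undup_uniq.
  - exact: orbl_uniq.
by move=> v; rewrite mem => /cnt ->.
Qed.

End CosetSum.
Section Coord.
Variables (F : fieldType) (M : sigmaModB F) (n : nat).
Local Notation V := (Mc M n).

Lemma span_clean (v : V) : exists p : seq V * (V -> F),
  [/\ uniq p.1, (forall b, b \in p.1 -> Bas b) & v = \sum_(b <- p.1) p.2 b *: b].
Proof.
have [s sB [c ->]] := Bas_span v.
exists (undup s, fun b => c b *+ count_mem b s); split => /=.
- exact: undup_uniq.
- by move=> b; rewrite mem_undup; apply: sB.
by rewrite sum_count; apply: eq_bigr => b _; rewrite scalerMnl.
Qed.

Definition spanp (v : V) := proj1_sig (constructive_indefinite_description _ (span_clean v)).
Definition supp (v : V) := (spanp v).1.
Definition coord (v : V) (y : V) : F := if y \in supp v then (spanp v).2 y else 0.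

Lemma spanpP v : [/\ uniq (supp v), (forall b, b \in supp v -> Bas b) &
   v = \sum_(b <- supp v) (spanp v).2 b *: b].
Proof. exact: (proj2_sig (constructive_indefinite_description _ (span_clean v))). Qed.

Lemma supp_uniq v : uniq (supp v). Proof. by case: (spanpP v). Qed.
Lemma supp_Bas v b : b \in supp v -> Bas b. Proof. by case: (spanpP v) => _ h _; apply: h. Qed.
Lemma coord_out v y : y \notin supp v -> coord v y = 0.
Proof. by rewrite /coord => /negbTE ->. Qed.

Lemma decomp_supp v : v = \sum_(b <- supp v) coord v b *: b.
Proof.
case: (spanpP v) => _ _ e; rewrite {1}e; apply: eq_big_seq => b bs.
by rewrite /coord bs.
Qed.

Lemma decomp_L v (L : seq V) : uniq L -> {subset supp v <= L} ->
  v = \sum_(b <- L) coord v b *: b.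
Proof.
move=> uL sub; rewrite (sum_sub0 (L := supp v)) ?supp_uniq //; first exact: decomp_supp.
by move=> y _ ys; rewrite coord_out // scale0r.
Qed.

Lemma coord_uniq (L : seq V) (d : V -> F) v : uniq L -> (forall b, b \in L -> Bas b) ->
  v = \sum_(b <- L) d b *: b -> forall y, coord v y = if y \in L then d y else 0.
Proof.
move=> uL LB ev y.
set L' := undup (L ++ supp v).
have uL' : uniq L' by apply: undup_uniq.
have subL : {subset L <= L'} by move=> b bL; rewrite mem_undup mem_cat bL.
have subS : {subset supp v <= L'} by move=> b bL; rewrite mem_undup mem_cat bL orbT.
have z : \sum_(b <- L') ((if b \in L then d b else 0) - coord v b) *: b = 0.
  under eq_bigr do rewrite scalerBl.
  rewrite sumrB -(decomp_L uL' subS) (sum_sub0 (L := L)) //.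
    rewrite [X in X - _](eq_big_seq (fun b => d b *: b)) -?ev ?subrr //.
    by move=> b bL; rewrite bL.
  by move=> b _ /negbTE ->; rewrite scale0r.
have hB : forall b, b \in L' -> Bas b.
  move=> b; rewrite mem_undup mem_cat => /orP [/LB|/supp_Bas] //.
have := @Bas_free F M n L' _ uL' hB z y.
case yL' : (y \in L').
  by move=> /(_ erefl) /eqP; rewrite subr_eq0 => /eqP <-.
move=> _; have yL : y \notin L by apply/negP => /subL; rewrite yL'.
rewrite (negbTE yL) coord_out //; apply/negP => /subS; by rewrite yL'.
Qed.

Lemma coordD c (u v : V) y : coord (c *: u + v) y = c * coord u y + coord v y.
Proof.
set L := undup (supp u ++ supp v).
have uL : uniq L by apply: undup_uniq.
have hB : forall b, b \in L -> Bas b.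
  move=> b; rewrite mem_undup mem_cat => /orP [/supp_Bas|/supp_Bas] //.
have su : {subset supp u <= L} by move=> b bL; rewrite mem_undup mem_cat bL.
have sv : {subset supp v <= L} by move=> b bL; rewrite mem_undup mem_cat bL orbT.
rewrite (@coord_uniq L (fun b => c * coord u b + coord v b) _ uL hB).
  case: ifP => // /negbT yL; rewrite !coord_out ?mulr0 ?addr0 //.
  - by apply/negP => /sv; rewrite (negbTE yL).
  - by apply/negP => /su; rewrite (negbTE yL).
rewrite {1}(decomp_L uL su) {1}(decomp_L uL sv) scaler_sumr -big_split /=.
by apply: eq_bigr => b _; rewrite scalerDl scalerA.
Qed.

Lemma coord0 y : coord 0 y = 0.
Proof.
have := coordD 1 0 0 y; rewrite scale1r addr0 mul1r => h.
by apply: (addrI (coord 0 y)); rewrite addr0 -h.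
Qed.

Lemma coordZ c u y : coord (c *: u) y = c * coord u y.
Proof. by rewrite -[c *: u]addr0 coordD coord0 addr0. Qed.

Lemma coord_sum (I : Type) (r : seq I) (f : I -> V) y :
  coord (\sum_(i <- r) f i) y = \sum_(i <- r) coord (f i) y.
Proof.
elim: r => [|a r IH]; first by rewrite !big_nil coord0.
by rewrite !big_cons -[f a]scale1r coordD mul1r IH scale1r.
Qed.

Lemma coord_act s (v y : V) : coord (act s v) (act s y) = coord v y.
Proof.
have e : act s v = \sum_(b <- map (act s) (supp v)) coord v (act s^-1 b) *: b.
  by rewrite big_map {1}(decomp_supp v) act_sum; apply: eq_bigr => b _; rewrite actZ actK.
rewrite (coord_uniq _ _ e).
- rewrite mem_map; last exact: act_inj.
  by rewrite actK; case: ifP => // /negbT ys; rewrite coord_out.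
- by rewrite map_inj_uniq ?supp_uniq //; apply: act_inj.
by move=> b /mapP [b' /supp_Bas bB ->]; apply: Bas_act.
Qed.

Lemma coord_orbsum (H : {set 'S_n}) (y0 : V) y : Bas y0 ->
  coord (\sum_(w <- orbl H y0) w) y = (y \in orbl H y0)%:R.
Proof.
move=> By0; have e : \sum_(w <- orbl H y0) w = \sum_(w <- orbl H y0) (fun _ => 1) w *: w.
  by apply: eq_bigr => w _; rewrite scale1r.
rewrite (coord_uniq _ _ e) ?orbl_uniq //; first by case: ifP.
by move=> b /orblP [s _ ->]; apply: Bas_act.
Qed.

Lemma coord_inv (H : {group 'S_n}) (v : V) (inv : forall s, s \in H -> act s v = v) s y :
  s \in H -> coord v (act s y) = coord v y.
Proof. by move=> sH; rewrite -{1}(inv s sH) coord_act. Qed.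

Lemma decomp (H : {group 'S_n}) (v : V) (inv : forall s, s \in H -> act s v = v) :
  exists Z : seq V, (forall z, z \in Z -> Bas z) /\
    v = \sum_(z <- Z) coord v z *: \sum_(w <- orbl H z) w.
Proof.
set Lc := undup (flatten (map (orbl H) (supp v))).
have LcP : forall b, reflect (exists2 b', b' \in supp v & b \in orbl H b') (b \in Lc).
  move=> b; rewrite mem_undup; apply: (iffP flattenP) => [[s /mapP [b' b's ->] bs]|[b' b's bs]].
    by exists b'.
  by exists (orbl H b') => //; apply: map_f.
have Lc_cl : forall b w, b \in Lc -> w \in orbl H b -> w \in Lc.
  move=> b w /LcP [b' b's bb'] wb; apply/LcP; exists b' => //; exact: orbl_trans bb' wb.
have Lc_B : forall b, b \in Lc -> Bas b.
  by move=> b /LcP [b' /supp_Bas Bb' /orblP [s _ ->]]; apply: Bas_act.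
have uLc : uniq Lc by apply: undup_uniq.
exists (undup (map (rep H) Lc)); split.
  move=> z; rewrite mem_undup => /mapP [b bL ->]; apply: (orbl_Bas (Lc_B _ bL)).
  exact: rep_in.
rewrite {1}(@decomp_L v Lc uLc); last first.
  by move=> b bs; apply/LcP; exists b => //; apply: orbl_refl.
rewrite (sum_part _ (rep H)); apply: eq_big_seq => z; rewrite mem_undup => /mapP [b0 b0L ->].
rewrite -big_filter scaler_sumr.
rewrite (perm_big (orbl H (rep H b0))).
  apply: eq_big_seq => w wO; congr (_ *: _).
  by case/orblP: wO => s sH ->; rewrite (coord_inv inv).
apply: uniq_perm; rewrite ?filter_uniq ?orbl_uniq // => w; rewrite mem_filter.
apply/andP/idP => [[/eqP e wL]|wr].
  by rewrite -e; apply: orbl_sym; apply: rep_in.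
have wb0 : w \in orbl H b0 by apply: orbl_trans (rep_in H b0) wr.
by rewrite (rep_eq wb0) eqxx (Lc_cl _ _ b0L wb0).
Qed.

End Coord.
Section Lists.

Lemma nth_unzip1 (T1 T2 : Type) (s : seq (T1 * T2)) d1 d2 k :
  nth d1 (unzip1 s) k = (nth (d1, d2) s k).1.
Proof.
case: (ltnP k (size s)) => ks; first by rewrite (nth_map (d1, d2)).
by rewrite !nth_default ?size_map.
Qed.

Lemma unzip1_permseq (T1 T2 : Type) p (rho : 'S_p) (s : seq (T1 * T2)) d1 d2 :
  unzip1 (permseq rho s (d1, d2)) = permseq rho (unzip1 s) d1.
Proof. by rewrite /permseq {1}/unzip1 -map_comp; apply: eq_map => j /=; rewrite (nth_unzip1 _ _ d2). Qed.

Lemma perm_permseq (T : eqType) p (rho : 'S_p) (s : seq T) d :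
  size s = p -> perm_eq (permseq rho s d) s.
Proof.
move=> sp.
have e1 : permseq rho s d = map (nth d s) (map val (map (fun j : 'I_p => (rho^-1)%g j) (enum 'I_p))).
  by rewrite /permseq -!map_comp.
have e2 : s = map (nth d s) (map val (enum 'I_p)).
  by rewrite val_enum_ord -sp; exact/esym/mkseq_nth.
rewrite {2}e2 e1; do 2!apply: perm_map; apply: uniq_perm; rewrite ?enum_uniq //.
  by rewrite map_inj_uniq ?enum_uniq //; apply: perm_inj.
move=> j; rewrite mem_enum; apply/mapP; exists (rho j); rewrite ?mem_enum //.
by rewrite permK.
Qed.

Lemma sumn_permseq p (rho : 'S_p) (s : seq nat) d :
  size s = p -> sumn (permseq rho s d) = sumn s.
Proof. by move=> sp; rewrite !sumnE; apply/perm_big/perm_permseq. Qed.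

Lemma size_flat_nseq (T : Type) (qa : seq (nat * T)) :
  size (flatten [seq nseq p.1 p.2 | p <- qa]) = sumn (unzip1 qa).
Proof. by elim: qa => //= [[q a] qa IH]; rewrite size_cat size_nseq IH. Qed.

Lemma sumn_qrhd q r : (size r <= sumn q)%N -> sumn (qrhd q r) = sumn r.
Proof. by move=> h; rewrite /qrhd -sumn_flatten reshapeKr. Qed.

Lemma size_qrhd q r : size (qrhd q r) = size q.
Proof. by rewrite size_map size_reshape. Qed.

Lemma unzip1_fargs (F : fieldType) (A A' : lmodType F) (f : A -> A') ra :
  unzip1 (fargs f ra) = unzip1 ra.
Proof. by elim: ra => //= -[r a] ra ->. Qed.

End Lists.

Section BetaLin.
Set Strict Implicit.
Variables (F : fieldType) (M : sigmaModB F) (A : lmodType F) (b : ops M A).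
Hypothesis bB : isBeta b.

Lemma youngInv0 n r : youngInv r (0 : Mc M n).
Proof. by move=> s _; rewrite act0. Qed.

Lemma youngInv_sum n r (I : Type) (L : seq I) (P : pred I) (f : I -> Mc M n) :
  (forall i, P i -> youngInv r (f i)) -> youngInv r (\sum_(i <- L | P i) f i).
Proof.
by move=> h s sH; rewrite act_sum; apply: eq_bigr => i Pi; apply: h.
Qed.

Lemma youngInvZ n r c (x : Mc M n) : youngInv r x -> youngInv r (c *: x).
Proof. by move=> h s sH; rewrite actZ h. Qed.

Lemma youngInv_orbsum n r (x : Mc M n) : youngInv r (orbsum r x).
Proof. by move=> s sH; apply: (act_sum_orbl (H := young_group n r)). Qed.

Lemma beta0 n ra : sumn (unzip1 ra) = n -> b n 0 ra = 0.
Proof.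
case: bB => _ [_ [_ [_ [_ b6]]]] sn.
have := b6 n 0 0 1 ra sn (@youngInv0 _ _) (@youngInv0 _ _).
rewrite scale1r addr0 scale1r => h.
by apply: (addrI (b n 0 ra)); rewrite addr0 -h.
Qed.

Lemma betaZ n ra c (x : Mc M n) : sumn (unzip1 ra) = n -> youngInv (unzip1 ra) x ->
  b n (c *: x) ra = c *: b n x ra.
Proof.
case: (bB) => _ [_ [_ [_ [_ b6]]]] sn ix.
by have := b6 n x 0 c ra sn ix (@youngInv0 _ _); rewrite !addr0 beta0 // addr0.
Qed.

Lemma beta_sum n ra (I : Type) (L : seq I) (P : pred I) (f : I -> Mc M n) :
  sumn (unzip1 ra) = n -> (forall i, P i -> youngInv (unzip1 ra) (f i)) ->
  b n (\sum_(i <- L | P i) f i) ra = \sum_(i <- L | P i) b n (f i) ra.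
Proof.
case: (bB) => _ [_ [_ [_ [_ b6]]]] sn h.
elim: L => [|a L IH]; first by rewrite !big_nil beta0.
rewrite !big_cons; case Pa: (P a) => //.
have := b6 n (f a) (\sum_(i <- L | P i) f i) 1 ra sn (h _ Pa) (@youngInv_sum n (unzip1 ra) I L P f h).
by rewrite !scale1r => ->; rewrite IH.
Qed.

End BetaLin.
Section Parts.
Set Strict Implicit.
Variables (F : fieldType) (M : sigmaModB F).

Lemma decompY n r (x : Mc M n) : youngInv r x ->
  exists Z, (forall z, z \in Z -> Bas z) /\ x = \sum_(z <- Z) coord x z *: orbsum r z.
Proof. by move=> ix; have [Z [ZB ex]] := @decomp F M n (young_group n r) x ix; exists Z. Qed.

Lemma beta_on_decomp (A0 : lmodType F) (b0 : ops M A0) n ra (x : Mc M n) Z (c : Mc M n -> F) :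
  isBeta b0 -> sumn (unzip1 ra) = n -> x = \sum_(z <- Z) c z *: orbsum (unzip1 ra) z ->
  b0 n x ra = \sum_(z <- Z) c z *: gammaOf b0 n z ra.
Proof.
move=> bB sn ->; rewrite beta_sum //.
  by apply: eq_bigr => z _; rewrite betaZ //; apply: youngInv_orbsum.
by move=> z _; apply: youngInvZ; apply: youngInv_orbsum.
Qed.

Lemma part1 (A : lmodType F) (b : ops M A) : isBeta b -> isGamma (gammaOf b).
Proof.
move=> bB; have [b1 [b2 [b3 [b4 [b5 b6]]]]] := bB.
split; [|split; [|split; [|split; [|split]]]].
- move=> n x ra s sn Bx sH; rewrite /gammaOf; congr (b n _ ra).
  exact: (@sum_orbl_eq F M n (young_group n (unzip1 ra)) x (act s x)
           (@orbl_act F M n (young_group n (unzip1 ra)) x s sH)).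
- move=> n x ra rho tau sn Bx bp; rewrite /gammaOf unzip1_permseq.
  rewrite (orbsum_conj x (size_map _ _) sn bp); apply: b1 => //.
  exact: youngInv_orbsum.
- move=> n x a0 ra sn Bx; rewrite /gammaOf /=.
  have -> : orbsum (0%N :: unzip1 ra) x = orbsum (unzip1 ra) x by rewrite /orbsum youngS0.
  by apply: b2 => //; apply: youngInv_orbsum.
- move=> n x r1 c a1 ra sn Bx; rewrite /gammaOf /=; apply: b3 => //.
  exact: youngInv_orbsum.
- move=> n x r qa sn sq Bx; rewrite /gammaOf.
  rewrite unzip1_zip ?size_flat_nseq ?sq //.
  have hz : unzip1 (zip (qrhd (unzip1 qa) r) (unzip2 qa)) = qrhd (unzip1 qa) r.
    by rewrite unzip1_zip // size_qrhd !size_map.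
  rewrite hz b4 //; last exact: youngInv_orbsum.
  have -> : cosetsum r (qrhd (unzip1 qa) r) (orbsum r x) =
     ((#|stab (qrhd (unzip1 qa) r) x| %/ #|stab r x|)%N%:R : F) *: orbsum (qrhd (unzip1 qa) r) x.
    exact: (@coset_sum F M n (young_group n r) (young_group n (qrhd (unzip1 qa) r))
              (youngS_qrhd n (unzip1 qa) r) x).
  rewrite betaZ // ?hz; last exact: youngInv_orbsum.
  by rewrite sumn_qrhd // sq.
- move=> n x r1 a0 a1 ra sn Bx; rewrite /gammaOf /= b5 //; last exact: youngInv_orbsum.
  apply: eq_bigr => l _.
  have lr : (l <= r1)%N by rewrite -ltnS ltn_ord.
  have -> : orbsum (r1 :: unzip1 ra) x =
     \sum_(C in orbclasses (val l :: (r1 - l)%N :: unzip1 ra) (r1 :: unzip1 ra) x)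
        orbsum (val l :: (r1 - l)%N :: unzip1 ra) (act (repr C) x).
    exact: (@orbit_decomp F M n (young_group n (r1 :: unzip1 ra))
              (young_group n (val l :: (r1 - l)%N :: unzip1 ra))
              (youngS_refine n (unzip1 ra) lr) x).
  rewrite beta_sum //=; last by move=> C _; apply: youngInv_orbsum.
  by move: sn => /= <-; rewrite addnA subnKC.
Qed.

Lemma part2 (A A' : lmodType F) (b : ops M A) (b' : ops M A') (f : {linear A -> A'}) :
  isBeta b -> isBeta b' -> isBetaMor b b' f -> isGammaMor (gammaOf b) (gammaOf b') f.
Proof.
move=> bB bB' mor n x ra sn Bx; rewrite /gammaOf unzip1_fargs; apply: mor => //.
exact: youngInv_orbsum.
Qed.

Lemma part3 (A A' : lmodType F) (b : ops M A) (b' : ops M A') (f : {linear A -> A'}) :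
  isBeta b -> isBeta b' -> isGammaMor (gammaOf b) (gammaOf b') f -> isBetaMor b b' f.
Proof.
move=> bB bB' gm n x ra sn ix.
have [Z [ZB ex]] := decompY ix.
rewrite (@beta_on_decomp _ _ _ _ _ _ _ bB sn ex).
have sn' : sumn (unzip1 (fargs f ra)) = n by rewrite unzip1_fargs.
rewrite -(unzip1_fargs f ra) in ex.
rewrite (@beta_on_decomp _ _ _ _ _ _ _ bB' sn' ex) linear_sum; apply: eq_big_seq => z zZ.
by rewrite linearZ /= gm //; apply: ZB.
Qed.

Lemma part4 (A : lmodType F) (b1 b2 : ops M A) : isBeta b1 -> isBeta b2 ->
  (forall n (x : Mc M n) ra, sumn (unzip1 ra) = n -> Bas x ->
     gammaOf b1 n x ra = gammaOf b2 n x ra) ->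
  forall n (x : Mc M n) ra, sumn (unzip1 ra) = n -> youngInv (unzip1 ra) x ->
     b1 n x ra = b2 n x ra.
Proof.
move=> bB1 bB2 eg n x ra sn ix.
have [Z [ZB ex]] := decompY ix.
rewrite (@beta_on_decomp _ _ _ _ _ _ _ bB1 sn ex) (@beta_on_decomp _ _ _ _ _ _ _ bB2 sn ex).
by apply: eq_big_seq => z zZ; rewrite eg //; apply: ZB.
Qed.

End Parts.
Section Surj.
Set Strict Implicit.
Variables (F : fieldType) (M : sigmaModB F) (A : lmodType F) (g : ops M A).
Hypothesis gG : isGamma g.

Definition hfun n ra (y : Mc M n) : A :=
  if rep (young_group n (unzip1 ra)) y == y then g n y ra else 0.

Definition bsur : ops M A := fun n x ra => \sum_(y <- supp x) coord x y *: hfun n ra y.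

Lemma bsur_L n (x : Mc M n) ra (L : seq (Mc M n)) : uniq L -> {subset supp x <= L} ->
  bsur n x ra = \sum_(y <- L) coord x y *: hfun n ra y.
Proof.
move=> uL sub; rewrite /bsur; symmetry; apply: sum_sub0 => //; first exact: supp_uniq.
by move=> y _ ys; rewrite coord_out // scale0r.
Qed.

Lemma bsur_lin n c (x x' : Mc M n) ra :
  bsur n (c *: x + x') ra = c *: bsur n x ra + bsur n x' ra.
Proof.
set L := undup (supp x ++ supp x' ++ supp (c *: x + x')).
have uL : uniq L by apply: undup_uniq.
have s1 : {subset supp x <= L} by move=> y ys; rewrite mem_undup mem_cat ys.
have s2 : {subset supp x' <= L} by move=> y ys; rewrite mem_undup !mem_cat ys orbT.
have s3 : {subset supp (c *: x + x') <= L}.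
  by move=> y ys; rewrite mem_undup !mem_cat ys !orbT.
rewrite (@bsur_L _ _ _ _ uL s1) (@bsur_L _ _ _ _ uL s2) (@bsur_L _ _ _ _ uL s3) scaler_sumr -big_split /=.
by apply: eq_bigr => y _; rewrite coordD scalerDl scalerA.
Qed.

Lemma bsur0 n ra : bsur n 0 ra = 0.
Proof.
have := @bsur_lin n 1 0 0 ra; rewrite scale1r addr0 scale1r => h.
by apply: (addrI (bsur n 0 ra)); rewrite addr0 -h.
Qed.

Lemma bsurZ n c (x : Mc M n) ra : bsur n (c *: x) ra = c *: bsur n x ra.
Proof. by rewrite -[c *: x]addr0 bsur_lin bsur0 addr0. Qed.

Lemma bsur_sum n ra (I : Type) (L : seq I) (P : pred I) (f : I -> Mc M n) :
  bsur n (\sum_(i <- L | P i) f i) ra = \sum_(i <- L | P i) bsur n (f i) ra.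
Proof.
elim: L => [|a L IH]; first by rewrite !big_nil bsur0.
rewrite !big_cons; case: (P a) => //.
by rewrite -[f a]scale1r bsur_lin IH !scale1r.
Qed.

Lemma bsur_orb n ra (y0 : Mc M n) : sumn (unzip1 ra) = n -> Bas y0 ->
  bsur n (orbsum (unzip1 ra) y0) ra = g n y0 ra.
Proof.
move=> sn By0.
set H := young_group n (unzip1 ra).
set O := orbl H y0.
have eO : orbsum (unzip1 ra) y0 = \sum_(w <- O) w by [].
set L := undup (supp (orbsum (unzip1 ra) y0) ++ O).
have uL : uniq L by apply: undup_uniq.
have s1 : {subset supp (orbsum (unzip1 ra) y0) <= L} by move=> y ys; rewrite mem_undup mem_cat ys.
have s2 : {subset O <= L} by move=> y ys; rewrite mem_undup mem_cat ys orbT.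
rewrite (@bsur_L _ _ _ _ uL s1).
rewrite (sum_sub0 (L := O)) ?orbl_uniq //; last first.
  by move=> y _ yO; rewrite eO coord_orbsum // (negbTE yO) scale0r.
rewrite (eq_big_seq (fun y => hfun n ra y)); last first.
  by move=> y yO; rewrite eO coord_orbsum // yO scale1r.
rewrite /hfun -big_mkcond /= -big_filter.
rewrite (@eq_in_filter _ _ (pred1 (rep H y0))); last first.
  by move=> y yO /=; rewrite (rep_eq yO) eq_sym.
rewrite filter_pred1_uniq ?orbl_uniq ?rep_in // big_seq1.
case/orblP: (rep_in H y0) => s sH ->.
by case: gG => wd _; apply: wd.
Qed.

Lemma bsur_dec n ra (x : Mc M n) (I : eqType) (Z : seq I) (c : I -> F) (y : I -> Mc M n) :
  sumn (unzip1 ra) = n -> (forall i, i \in Z -> Bas (y i)) ->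
  x = \sum_(i <- Z) c i *: orbsum (unzip1 ra) (y i) ->
  bsur n x ra = \sum_(i <- Z) c i *: g n (y i) ra.
Proof.
move=> sn yB ->; rewrite bsur_sum; apply: eq_big_seq => i iZ.
by rewrite bsurZ bsur_orb //; apply: yB.
Qed.

Lemma bsur_beta : isBeta bsur.
Proof.
case: (gG) => gwd [g1 [g2 [g3 [g4 g5]]]].
split; [|split; [|split; [|split; [|split]]]].
- move=> n x ra rho tau sn ix bp.
  have [Z [ZB ex]] := decompY ix.
  have sn' : sumn (unzip1 (permseq rho ra (0%N, 0))) = n.
    by rewrite unzip1_permseq sumn_permseq ?size_map.
  rewrite (@bsur_dec n ra x _ Z (coord x) id sn ZB ex).
  rewrite (@bsur_dec n (permseq rho ra (0%N, 0)) (act tau x) _ Z (coord x) (act tau) sn');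
    last first.
  + rewrite {1}ex act_sum; apply: eq_bigr => z _.
    by rewrite actZ unzip1_permseq (orbsum_conj _ (size_map _ _) sn bp).
  + by move=> z zZ; apply: Bas_act; apply: ZB.
  by apply: eq_big_seq => z zZ; rewrite -g1 //; apply: ZB.
- move=> n x a0 ra sn ix.
  have [Z [ZB ex]] := decompY ix.
  have ex' : x = \sum_(z <- Z) coord x z *: orbsum (unzip1 ((0%N, a0) :: ra)) z.
    by rewrite {1}ex; apply: eq_bigr => z _; rewrite /= /orbsum youngS0.
  rewrite (@bsur_dec n ((0%N, a0) :: ra) x _ Z (coord x) id sn ZB ex').
  rewrite (@bsur_dec n ra x _ Z (coord x) id sn ZB ex).
  by apply: eq_big_seq => z zZ; rewrite g2 //; apply: ZB.
- move=> n x r1 c a1 ra sn ix.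
  have [Z [ZB ex]] := decompY ix.
  rewrite (@bsur_dec n ((r1, c *: a1) :: ra) x _ Z (coord x) id sn ZB ex).
  rewrite (@bsur_dec n ((r1, a1) :: ra) x _ Z (coord x) id sn ZB ex) scaler_sumr.
  apply: eq_big_seq => z zZ; rewrite g3 //; last by apply: ZB.
  by rewrite !scalerA mulrC.
- move=> n x r qa sn sq ix.
  have [Z [ZB ex]] := decompY ix.
  set r' := qrhd (unzip1 qa) r.
  set fl := flatten _.
  have h1 : unzip1 (zip r fl) = r by rewrite unzip1_zip // size_flat_nseq sq.
  have h2 : unzip1 (zip r' (unzip2 qa)) = r' by rewrite unzip1_zip // size_qrhd !size_map.
  have sn1 : sumn (unzip1 (zip r fl)) = n by rewrite h1.
  have sn2 : sumn (unzip1 (zip r' (unzip2 qa))) = n by rewrite h2 sumn_qrhd // sq.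
  have ex1 : x = \sum_(z <- Z) coord x z *: orbsum (unzip1 (zip r fl)) z by rewrite h1.
  rewrite (@bsur_dec n (zip r fl) x _ Z (coord x) id sn1 ZB ex1).
  pose k := fun z : Mc M n => ((#|stab r' z| %/ #|stab r z|)%N%:R : F).
  have cs : forall z, \sum_(D in rcosets (youngS n r) (youngS n r')) act (repr D) (orbsum r z)
                      = k z *: orbsum r' z.
    by move=> z; exact: (@coset_sum F M n (young_group n r) (young_group n r')
                            (youngS_qrhd n (unzip1 qa) r) z).
  have ec : cosetsum r r' x =
      \sum_(z <- Z) (coord x z * k z) *: orbsum (unzip1 (zip r' (unzip2 qa))) z.
    rewrite h2 /cosetsum {1}ex.
    under eq_bigr do rewrite act_sum.
    rewrite exchange_big /=; apply: eq_bigr => z _.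
    under eq_bigr do rewrite actZ.
    by rewrite -scaler_sumr cs scalerA.
  rewrite ec (@bsur_dec n (zip r' (unzip2 qa)) _ _ Z (fun z => coord x z * k z) id sn2 ZB erefl).
  apply: eq_big_seq => z zZ; rewrite g4 //; last by apply: ZB.
  by rewrite scalerA.
- move=> n x r1 a0 a1 ra sn ix.
  have [Z [ZB ex]] := decompY ix.
  rewrite (@bsur_dec n ((r1, a0 + a1) :: ra) x _ Z (coord x) id sn ZB ex).
  pose S (l : 'I_r1.+1) (z : Mc M n) :=
    \sum_(C in orbclasses (val l :: (r1 - l)%N :: unzip1 ra) (r1 :: unzip1 ra) z)
       g n (act (repr C) z) ((val l, a0) :: ((r1 - l)%N, a1) :: ra).
  transitivity (\sum_(z <- Z) coord x z *: \sum_(l < r1.+1) S l z).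
    by apply: eq_big_seq => z zZ; rewrite g5 //; apply: ZB.
  symmetry; rewrite (eq_bigr (fun l : 'I_r1.+1 => \sum_(z <- Z) coord x z *: S l z)).
    by rewrite exchange_big /=; apply: eq_bigr => z _; rewrite scaler_sumr.
  move=> l _.
  have lr : (l <= r1)%N by rewrite -ltnS ltn_ord.
  have od : forall z : Mc M n, orbsum (r1 :: unzip1 ra) z =
     \sum_(C in orbclasses (val l :: (r1 - l)%N :: unzip1 ra) (r1 :: unzip1 ra) z)
        orbsum (val l :: (r1 - l)%N :: unzip1 ra) (act (repr C) z).
    by move=> z; exact: (@orbit_decomp F M n (young_group n (r1 :: unzip1 ra))
              (young_group n (val l :: (r1 - l)%N :: unzip1 ra))
              (youngS_refine n (unzip1 ra) lr) z).
  rewrite {1}ex bsur_sum; apply: eq_big_seq => z zZ.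
  rewrite od bsurZ bsur_sum /S; congr (_ *: _); apply: eq_bigr => C _.
  rewrite (@bsur_orb n ((val l, a0) :: ((r1 - l)%N, a1) :: ra)) //=; last by apply: Bas_act; apply: ZB.
  by move: sn => /= <-; rewrite addnA subnKC.
- by move=> n x y c ra _ _ _; apply: bsur_lin.
Qed.

End Surj.

Theorem proposition4p8 (F : fieldType) (M : sigmaModB F) :
  (* P_M sends objects of beta(M) to objects of gamma(M) *)
  (forall (A : lmodType F) (b : ops M A), isBeta b -> isGamma (gammaOf b))
  (* P_M (identity) sends morphisms to morphisms *)
  /\ (forall (A A' : lmodType F) (b : ops M A) (b' : ops M A') (f : {linear A -> A'}),
        isBeta b -> isBeta b' -> isBetaMor b b' f ->
        isGammaMor (gammaOf b) (gammaOf b') f)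
  (* P_M is full: hom-sets are mapped onto *)
  /\ (forall (A A' : lmodType F) (b : ops M A) (b' : ops M A') (f : {linear A -> A'}),
        isBeta b -> isBeta b' -> isGammaMor (gammaOf b) (gammaOf b') f ->
        isBetaMor b b' f)
  (* P_M is injective on objects *)
  /\ (forall (A : lmodType F) (b1 b2 : ops M A), isBeta b1 -> isBeta b2 ->
        (forall n (x : Mc M n) ra, sumn (unzip1 ra) = n -> Bas x ->
           gammaOf b1 n x ra = gammaOf b2 n x ra) ->
        forall n (x : Mc M n) ra, sumn (unzip1 ra) = n -> youngInv (unzip1 ra) x ->
           b1 n x ra = b2 n x ra)
  (* P_M is surjective on objects *)
  /\ (forall (A : lmodType F) (g : ops M A), isGamma g ->
        exists2 b : ops M A, isBeta b &
          forall n (x : Mc M n) ra, sumn (unzip1 ra) = n -> Bas x ->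
            g n x ra = gammaOf b n x ra).
Proof.
split; first exact: part1.
split; first exact: part2.
split; first exact: part3.
split; first exact: part4.
move=> A g gG; exists (@bsur F M A g); first exact: (@bsur_beta F M A g gG).
by move=> n x ra sn Bx; rewrite /gammaOf (@bsur_orb F M A g gG n ra x).
Qed.
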